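(* Let $\epsilon'>0$, $0<\mu'\le1$, $0<\Gamma_0\le1$, and let $\tau\subset\mathbb R^m$ be a $\Gamma_0$-flake with $L(\tau)\le3\epsilon'$ and $\ell(\tau)\ge\mu'\epsilon'$. Suppose there exist $p\in\tau$, a ball $B(C,R)$ circumscribing $\tau_p$ with $R<\frac32\epsilon'$, and $\tilde\delta_0\ge0$ with $d(p,\partial B(C,R))\le\tilde\delta_0\,\ell(\tau_p)$. Then $$d\big(p,S(\tau_p)\big)\le\Big(\frac{14}{\mu'}\tilde\delta_0+\frac{216}{\mu'^3}\Gamma_0\Big)R(\tau_p).$$
   Context: A simplex is a nonempty finite subset $\sigma\subset\mathbb R^m$ (vertices need not be affinely independent); $\dim\sigma=|\sigma|-1$; faces are nonempty subsets. For $p\in\sigma$, $\sigma_p=\sigma\setminus\{p\}$. $L(\sigma)$, $\ell(\sigma)$ are the largest and smallest distances between distinct vertices. Altitude $D(p,\sigma)=d(p,\mathrm{aff}(\sigma_p))$. Thickness of a $j$-simplex: $\Upsilon(\sigma)=1$ if $j=0$, else $\min_{p}D(p,\sigma)/(jL(\sigma))$. $\sigma$ is $\Gamma_0$-good if every $j$-face $\sigma^j$ satisfies $\Upsilon(\sigma^j)\ge\Gamma_0^j$; $\Gamma_0$-bad otherwise; a $\Gamma_0$-flake is a $\Gamma_0$-bad simplex whose proper faces are all $\Gamma_0$-good. A circumscribing ball of $\sigma$ is an open ball whose boundary contains all vertices of $\sigma$. If one exists, the circumcentre $c(\sigma)$ and circumradius $R(\sigma)$ are the centre and radius of the smallest one.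 The circumsphere is $S(\sigma)=\partial B(c(\sigma),R(\sigma))\cap\mathrm{aff}(\sigma)$. *)

(* Defs.v *)
(* classical reals. Points of R^m are functions nat -> R
   vanishing at coordinates >= m. *)
From Stdlib Require Import Reals Lra Lia List ClassicalEpsilon.
Import ListNotations.
Open Scope R_scope.

Definition Pt := nat -> R.

Definition inRm (m : nat) (x : Pt) : Prop := forall i, (m <= i)%nat -> x i = 0.

Definition sumsq (m : nat) (x : Pt) : R :=
  fold_right Rplus 0 (map (fun i => x i ^ 2) (seq 0 m)).

Definition dist (m : nat) (x y : Pt) : R := sqrt (sumsq m (fun i => x i - y i)).

(* infimum / supremum of a set of reals (chosen by epsilon; meaningful when they exist) *)
Definition is_lower_bound (P : R -> Prop) (d : R) : Prop := forall x, P x -> d <= x.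
Definition is_glb (P : R -> Prop) (d : R) : Prop :=
  is_lower_bound P d /\ (forall b, is_lower_bound P b -> b <= d).
Definition Inf (P : R -> Prop) : R := epsilon (inhabits 0) (is_glb P).
Definition Sup (P : R -> Prop) : R := epsilon (inhabits 0) (is_lub P).

Definition dist_set (m : nat) (x : Pt) (S : Pt -> Prop) : R :=
  Inf (fun d => exists y, S y /\ d = dist m x y).

Definition simplex (m : nat) (s : list Pt) : Prop :=
  s <> [] /\ NoDup s /\ forall v, In v s -> inRm m v.

Definition is_face (s t : list Pt) : Prop := t <> [] /\ NoDup t /\ incl t s.

Definition pt_eq_dec (x y : Pt) : {x = y} + {x <> y} := excluded_middle_informative (x = y).
Definition remove_pt (p : Pt) (s : list Pt) : list Pt := remove pt_eq_dec p s.

Definition Lmax (m : nat) (s : list Pt) : R :=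
  Sup (fun d => exists x y, In x s /\ In y s /\ x <> y /\ d = dist m x y).
Definition lmin (m : nat) (s : list Pt) : R :=
  Inf (fun d => exists x y, In x s /\ In y s /\ x <> y /\ d = dist m x y).

Definition lincomb (lam : list R) (s : list Pt) : Pt :=
  fun i => fold_right Rplus 0 (map (fun av => fst av * snd av i) (combine lam s)).
Definition aff (s : list Pt) (y : Pt) : Prop :=
  exists lam : list R, length lam = length s /\ fold_right Rplus 0 lam = 1 /\
    y = lincomb lam s.

Definition altitude (m : nat) (p : Pt) (s : list Pt) : R :=
  dist_set m p (aff (remove_pt p s)).

Definition thickness (m : nat) (s : list Pt) : R :=
  match (length s - 1)%nat with
  | O => 1
  | j => Inf (fun t => exists p, In p s /\
                 t = altitude m p s / (INR j * Lmax m s))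
  end.

Definition good (m : nat) (G0 : R) (s : list Pt) : Prop :=
  forall t, is_face s t -> thickness m t >= G0 ^ (length t - 1).
Definition bad (m : nat) (G0 : R) (s : list Pt) : Prop := ~ good m G0 s.
Definition flake (m : nat) (G0 : R) (s : list Pt) : Prop :=
  bad m G0 s /\ forall t, is_face s t -> (length t < length s)%nat -> good m G0 t.

Definition sphere (m : nat) (c : Pt) (r : R) (y : Pt) : Prop := inRm m y /\ dist m c y = r.

Definition circumscribes (m : nat) (s : list Pt) (c : Pt) (r : R) : Prop :=
  inRm m c /\ 0 < r /\ forall v, In v s -> dist m c v = r.

Definition is_circ (m : nat) (s : list Pt) (cr : Pt * R) : Prop :=
  circumscribes m s (fst cr) (snd cr) /\
  forall c' r', circumscribes m s c' r' -> snd cr <= r'.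
Definition circ (m : nat) (s : list Pt) : Pt * R :=
  epsilon (inhabits ((fun _ => 0), 0)) (is_circ m s).
Definition circumcentre (m : nat) (s : list Pt) : Pt := fst (circ m s).
Definition circumradius (m : nat) (s : list Pt) : R := snd (circ m s).

Definition circumsphere (m : nat) (s : list Pt) (y : Pt) : Prop :=
  sphere m (circumcentre m s) (circumradius m s) y /\ aff s y.

(* Main.v *)
Require Import Defs.
From Stdlib Require Import Reals List Lra Lia Psatz ClassicalEpsilon FunctionalExtensionality PropExtensionality.
Require Import Defs.
Import ListNotations.
Open Scope R_scope.

Definition vadd (x y : Pt) : Pt := fun i => x i + y i.
Definition vsub (x y : Pt) : Pt := fun i => x i - y i.
Definition vscal (c : R) (x : Pt) : Pt := fun i => c * x i.

Fixpoint Sm (l : list nat) (f : nat -> R) : R :=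
  match l with [] => 0 | i :: l => f i + Sm l f end.

Lemma Sm_ext l f g : (forall i, In i l -> f i = g i) -> Sm l f = Sm l g.
Proof. induction l; simpl; intros H; auto. rewrite H, IHl; auto. Qed.
Lemma Sm_lin l f g a b : Sm l (fun i => a * f i + b * g i) = a * Sm l f + b * Sm l g.
Proof. induction l; simpl. ring. rewrite IHl; ring. Qed.
Lemma Sm_nonneg l f : (forall i, 0 <= f i) -> 0 <= Sm l f.
Proof. induction l; simpl; intros H. lra. specialize (IHl H). specialize (H a). lra. Qed.
Lemma Sm_zero l f : (forall i, 0 <= f i) -> Sm l f = 0 -> forall i, In i l -> f i = 0.
Proof.
  induction l; simpl; intros H E i Hi. contradiction.
  assert (0 <= Sm l f) by (apply Sm_nonneg; auto). pose proof (H a).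
  destruct Hi as [<-|Hi]. lra. apply IHl; auto. lra.
Qed.

Lemma fold_map_Sm l f : fold_right Rplus 0 (map f l) = Sm l f.
Proof. induction l; simpl; auto. rewrite IHl; auto. Qed.

Lemma Sm_0 l : Sm l (fun _ => 0) = 0.
Proof. induction l; simpl; auto. rewrite IHl; ring. Qed.

Definition dot (m : nat) (x y : Pt) : R := Sm (seq 0 m) (fun i => x i * y i).

Lemma sumsq_dot m x : sumsq m x = dot m x x.
Proof. unfold sumsq, dot. rewrite fold_map_Sm. apply Sm_ext; intros; ring. Qed.

Lemma dist_dot m x y : dist m x y = sqrt (dot m (vsub x y) (vsub x y)).
Proof. unfold dist. rewrite sumsq_dot. reflexivity. Qed.

Lemma dot_comm m x y : dot m x y = dot m y x.
Proof. unfold dot. apply Sm_ext. intros; ring. Qed.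
Lemma dot_add_l m x y z : dot m (vadd x y) z = dot m x z + dot m y z.
Proof. unfold dot, vadd. rewrite <- (Rmult_1_l (Sm _ (fun i => x i * z i))), <- (Rmult_1_l (Sm _ (fun i => y i * z i))).
 rewrite <- Sm_lin. apply Sm_ext. intros; ring. Qed.
Lemma dot_sub_l m x y z : dot m (vsub x y) z = dot m x z - dot m y z.
Proof. unfold dot, vsub. replace (Sm (seq 0 m) (fun i => x i * z i) - Sm (seq 0 m) (fun i => y i * z i))
  with (1 * Sm (seq 0 m) (fun i => x i * z i) + (-1) * Sm (seq 0 m) (fun i => y i * z i)) by ring.
 rewrite <- Sm_lin. apply Sm_ext. intros; ring. Qed.
Lemma dot_scal_l m c x z : dot m (vscal c x) z = c * dot m x z.
Proof. unfold dot, vscal. replace (c * Sm (seq 0 m) (fun i => x i * z i))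
  with (c * Sm (seq 0 m) (fun i => x i * z i) + 0 * Sm (seq 0 m) (fun i => x i * z i)) by ring.
 rewrite <- Sm_lin. apply Sm_ext. intros; ring. Qed.
Lemma dot_add_r m x y z : dot m z (vadd x y) = dot m z x + dot m z y.
Proof. rewrite !(dot_comm m z). apply dot_add_l. Qed.
Lemma dot_sub_r m x y z : dot m z (vsub x y) = dot m z x - dot m z y.
Proof. rewrite !(dot_comm m z). apply dot_sub_l. Qed.
Lemma dot_scal_r m c x z : dot m z (vscal c x) = c * dot m z x.
Proof. rewrite !(dot_comm m z). apply dot_scal_l. Qed.
Lemma dot_nonneg m x : 0 <= dot m x x.
Proof. unfold dot. apply Sm_nonneg. intros; nra. Qed.
Lemma dot_zero_coord m x : dot m x x = 0 -> forall i, (i < m)%nat -> x i = 0.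
Proof. intros H i Hi. unfold dot in H.
  assert (x i * x i = 0). { apply (Sm_zero (seq 0 m) (fun i => x i * x i)); auto. intros; nra. apply in_seq; lia. } nra. Qed.
Lemma dot_zero_any m x y : dot m x x = 0 -> dot m x y = 0.
Proof. intros H. unfold dot. rewrite <- (Sm_0 (seq 0 m)).
  apply Sm_ext. intros i Hi. apply in_seq in Hi. rewrite (dot_zero_coord m x H i); [ring|lia]. Qed.

Definition nrm m x := sqrt (dot m x x).

Lemma cauchy_schwarz m x y : (dot m x y)^2 <= dot m x x * dot m y y.
Proof.
  destruct (Req_dec (dot m y y) 0) as [E|E].
  - rewrite (dot_comm m x), (dot_zero_any m y x E), E. nra.
  - pose proof (dot_nonneg m y).
    set (t := dot m x y / dot m y y).
    pose proof (dot_nonneg m (vsub x (vscal t y))).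
    rewrite dot_sub_l, !dot_sub_r, !dot_scal_l, !dot_scal_r in H0.
    rewrite (dot_comm m y x) in H0.
    assert (0 < dot m y y) by lra.
    assert (0 <= dot m y y * (dot m x x - t * dot m x y - (t * dot m x y - t * (t * dot m y y)))) by (apply Rmult_le_pos; lra).
    replace (dot m y y * (dot m x x - t * dot m x y - (t * dot m x y - t * (t * dot m y y)))) with
      (dot m x x * dot m y y - dot m x y ^ 2) in H2 by (unfold t; field; lra).
    lra.
Qed.

Lemma nrm_nonneg m x : 0 <= nrm m x.
Proof. apply sqrt_pos. Qed.
Lemma nrm_sq m x : nrm m x * nrm m x = dot m x x.
Proof. apply sqrt_sqrt, dot_nonneg. Qed.

Lemma dot_le_nrm m x y : dot m x y <= nrm m x * nrm m y.
Proof.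
  pose proof (cauchy_schwarz m x y). pose proof (nrm_sq m x). pose proof (nrm_sq m y).
  pose proof (nrm_nonneg m x). pose proof (nrm_nonneg m y).
  destruct (Rle_dec (dot m x y) (nrm m x * nrm m y)) as [|n]; auto.
  exfalso. apply Rnot_le_lt in n.
  assert (0 <= nrm m x * nrm m y) by (apply Rmult_le_pos; auto).
  assert ((nrm m x * nrm m y) * (nrm m x * nrm m y) < dot m x y * dot m x y) by (apply Rmult_le_0_lt_compat; auto).
  nra.
Qed.

Lemma nrm_triangle m x y : nrm m (vadd x y) <= nrm m x + nrm m y.
Proof.
  pose proof (nrm_sq m (vadd x y)). rewrite dot_add_l, !dot_add_r in H.
  rewrite (dot_comm m y x) in H.
  pose proof (dot_le_nrm m x y). pose proof (nrm_sq m x). pose proof (nrm_sq m y).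
  pose proof (nrm_nonneg m x). pose proof (nrm_nonneg m y). pose proof (nrm_nonneg m (vadd x y)).
  nra.
Qed.

Lemma dist_nrm m x y : dist m x y = nrm m (vsub x y).
Proof. apply dist_dot. Qed.

Lemma dist_nonneg m x y : 0 <= dist m x y.
Proof. rewrite dist_nrm. apply nrm_nonneg. Qed.

Lemma dist_sym m x y : dist m x y = dist m y x.
Proof. rewrite !dist_nrm. unfold nrm. f_equal.
  replace (vsub y x) with (vscal (-1) (vsub x y)). rewrite dot_scal_l, dot_scal_r. ring.
  apply functional_extensionality; intro i; unfold vscal, vsub; ring. Qed.

Lemma dist_triangle m x y z : dist m x z <= dist m x y + dist m y z.
Proof. rewrite !dist_nrm. replace (vsub x z) with (vadd (vsub x y) (vsub y z)). apply nrm_triangle.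
  apply functional_extensionality; intro i; unfold vadd, vsub; ring. Qed.

Lemma dist_rev m x y z : Rabs (dist m x z - dist m y z) <= dist m x y.
Proof. pose proof (dist_triangle m x y z). pose proof (dist_triangle m y x z).
  rewrite (dist_sym m y x) in H0. apply Rabs_le; lra. Qed.

Lemma dist_sq m x y : dist m x y * dist m x y = dot m (vsub x y) (vsub x y).
Proof. rewrite dist_nrm; apply nrm_sq. Qed.

Lemma dist_zero m x y : inRm m x -> inRm m y -> dist m x y = 0 -> x = y.
Proof. intros Hx Hy H. assert (E: dot m (vsub x y) (vsub x y) = 0) by (rewrite <- dist_sq, H; ring).
  apply functional_extensionality; intro i. destruct (Nat.lt_ge_cases i m).
  pose proof (dot_zero_coord m _ E i H0). unfold vsub in H1. lra.
  rewrite Hx, Hy; auto. Qed.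

Lemma Inf_spec (P : R -> Prop) : (exists x, P x) -> (exists b, is_lower_bound P b) -> is_glb P (Inf P).
Proof.
  intros [x Hx] [b Hb]. unfold Inf. apply epsilon_spec.
  destruct (completeness (fun y => P (- y))) as [M [HM1 HM2]].
  - exists (- b). intros y Hy. apply Hb in Hy. lra.
  - exists (- x). rewrite Ropp_involutive. auto.
  - exists (- M). split.
    + intros y Hy. assert (- y <= M) by (apply HM1; rewrite Ropp_involutive; auto). lra.
    + intros c Hc. assert (M <= - c). { apply HM2. intros y Hy. apply Hc in Hy. lra. } lra.
Qed.

Lemma Sup_spec (P : R -> Prop) : (exists x, P x) -> bound P -> is_lub P (Sup P).
Proof.
  intros Hx Hb. unfold Sup. apply epsilon_spec.
  destruct (completeness P Hb Hx) as [M HM]. eauto.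
Qed.

Lemma dist_set_le m x (S : Pt -> Prop) y : S y -> dist_set m x S <= dist m x y.
Proof.
  intros Hy. unfold dist_set.
  destruct (Inf_spec (fun d => exists y, S y /\ d = dist m x y)) as [H1 H2].
  - eauto. - exists 0. intros d [z [_ ->]]. apply dist_nonneg.
  - apply H1. eauto.
Qed.

Lemma dist_set_ge m x (S : Pt -> Prop) d : (exists y, S y) -> (forall y, S y -> d <= dist m x y) ->
  d <= dist_set m x S.
Proof.
  intros [y Hy] H. unfold dist_set.
  destruct (Inf_spec (fun d => exists y, S y /\ d = dist m x y)) as [H1 H2].
  - eauto. - exists 0. intros d' [z [_ ->]]. apply dist_nonneg.
  - apply H2. intros d' [z [Hz ->]]. auto.
Qed.

Definition ladd (l1 l2 : list R) := map (fun ab => fst ab + snd ab) (combine l1 l2).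
Definition lscal (c : R) (l : list R) := map (Rmult c) l.
Notation lsum l := (fold_right Rplus 0 l).
Definition vzero : Pt := fun _ => 0.

Lemma lincomb_cons a lam v s : lincomb (a :: lam) (v :: s) = vadd (vscal a v) (lincomb lam s).
Proof. reflexivity. Qed.
Lemma lincomb_nil_l s : lincomb [] s = vzero.
Proof. destruct s; reflexivity. Qed.
Lemma lincomb_nil_r l : lincomb l [] = vzero.
Proof. destruct l; reflexivity. Qed.

Lemma ladd_length l1 l2 : length l1 = length l2 -> length (ladd l1 l2) = length l1.
Proof. intros H. unfold ladd. rewrite length_map, length_combine. lia. Qed.
Lemma lscal_length c l : length (lscal c l) = length l.
Proof. apply length_map. Qed.
Lemma lsum_ladd l1 l2 : length l1 = length l2 -> lsum (ladd l1 l2) = lsum l1 + lsum l2.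
Proof. revert l2; induction l1; destruct l2; intros H; simpl in H; try discriminate. simpl; ring.
  change (ladd (a :: l1) (r :: l2)) with ((a + r) :: ladd l1 l2). simpl. rewrite IHl1 by lia. ring. Qed.
Lemma lsum_lscal c l : lsum (lscal c l) = c * lsum l.
Proof. induction l. simpl; ring. change (lscal c (a :: l)) with (c * a :: lscal c l). simpl. rewrite IHl. ring. Qed.

Lemma lincomb_ladd l1 l2 s : length l1 = length s -> length l2 = length s ->
  lincomb (ladd l1 l2) s = vadd (lincomb l1 s) (lincomb l2 s).
Proof.
  revert l1 l2; induction s; intros l1 l2 H1 H2.
  - rewrite !lincomb_nil_r. apply functional_extensionality; intro; unfold vadd, vzero; ring.
  - destruct l1, l2; simpl in *; try discriminate.
    change (ladd (r :: l1) (r0 :: l2)) with ((r + r0) :: ladd l1 l2).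
    rewrite !lincomb_cons, IHs by lia.
    apply functional_extensionality; intro; unfold vadd, vscal; ring.
Qed.
Lemma lincomb_lscal c l s : lincomb (lscal c l) s = vscal c (lincomb l s).
Proof.
  revert l; induction s; intros l.
  - rewrite !lincomb_nil_r. apply functional_extensionality; intro; unfold vscal, vzero; ring.
  - destruct l; simpl.
    + rewrite lincomb_nil_l. apply functional_extensionality; intro; unfold vscal, vzero; ring.
    + change (lscal c (r :: l)) with ((c * r) :: lscal c l).
      rewrite !lincomb_cons, IHs.
      apply functional_extensionality; intro; unfold vadd, vscal; ring.
Qed.

Lemma aff_comb3 s y z1 z2 t : aff s y -> aff s z1 -> aff s z2 -> aff s (vadd y (vscal t (vsub z1 z2))).
Proof.
  intros [ly [Ly [Sy ->]]] [l1 [L1 [S1 ->]]] [l2 [L2 [S2 ->]]].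
  exists (ladd ly (ladd (lscal t l1) (lscal (-t) l2))).
  assert (length (lscal t l1) = length s) by (rewrite lscal_length; auto).
  assert (length (lscal (-t) l2) = length s) by (rewrite lscal_length; auto).
  assert (length (ladd (lscal t l1) (lscal (-t) l2)) = length s) by (rewrite ladd_length; lia).
  split; [rewrite ladd_length; lia|]. split.
  - rewrite lsum_ladd, lsum_ladd, !lsum_lscal by lia. rewrite Sy, S1, S2. ring.
  - rewrite !lincomb_ladd, !lincomb_lscal by auto.
    apply functional_extensionality; intro; unfold vadd, vscal, vsub; ring.
Qed.

Lemma aff_cons s v y : aff s y -> aff (v :: s) y.
Proof. intros [l [L [Sl ->]]]. exists (0 :: l). simpl. split; [lia|]. split. lra.
  rewrite lincomb_cons. apply functional_extensionality; intro. unfold vadd, vscal. ring. Qed.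

Fixpoint zeros (n : nat) : list R := match n with O => [] | S n => 0 :: zeros n end.
Lemma zeros_length n : length (zeros n) = n. Proof. induction n; simpl; auto. Qed.
Lemma zeros_sum n : fold_right Rplus 0 (zeros n) = 0. Proof. induction n; simpl; auto. rewrite IHn; ring. Qed.
Lemma lincomb_zeros n s : lincomb (zeros n) s = vzero.
Proof. revert s; induction n; intros s. apply lincomb_nil_l. destruct s. apply lincomb_nil_r.
  simpl. rewrite lincomb_cons, IHn. apply functional_extensionality; intro; unfold vadd, vscal, vzero; ring. Qed.

Lemma aff_head v s : aff (v :: s) v.
Proof. exists (1 :: zeros (length s)). simpl. rewrite zeros_length, zeros_sum. split; auto. split. ring.
  rewrite lincomb_cons, lincomb_zeros. apply functional_extensionality; intro; unfold vadd, vscal, vzero; ring. Qed.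

Lemma aff_vertex s u : In u s -> aff s u.
Proof. induction s; simpl; intros H. contradiction. destruct H as [<-|H]. apply aff_head. apply aff_cons; auto. Qed.

Lemma aff_nil y : ~ aff [] y.
Proof. intros [l [L [Sl _]]]. destruct l; simpl in *; try discriminate. lra. Qed.

Lemma aff_single w y : aff [w] y -> y = w.
Proof. intros [l [L [Sl ->]]]. destruct l as [|a [|b l]]; simpl in *; try discriminate.
  rewrite lincomb_cons, lincomb_nil_l. apply functional_extensionality; intro. unfold vadd, vscal, vzero. replace a with 1 by lra. ring. Qed.

Lemma aff_decomp v s y b : aff (v :: s) y -> aff s b ->
  exists y' t, aff s y' /\ y = vadd y' (vscal t (vsub v b)).
Proof.
  intros [l [L [Sl Ey]]] [lb [Lb [Sb Eb]]].
  destruct l as [|a rest]; simpl in L; try discriminate. simpl in Sl.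
  exists (vadd (lincomb rest s) (vscal a b)), a. split.
  - exists (ladd rest (lscal a lb)). split. rewrite ladd_length; rewrite ?lscal_length; lia.
    split. rewrite lsum_ladd, lsum_lscal by (rewrite lscal_length; lia). rewrite Sb. lra.
    rewrite lincomb_ladd, lincomb_lscal, <- Eb by (rewrite ?lscal_length; lia). reflexivity.
  - rewrite Ey, lincomb_cons. apply functional_extensionality; intro; unfold vadd, vscal, vsub; ring.
Qed.

Lemma aff_incl s s' y : (forall u, In u s -> aff s' u) -> aff s y -> aff s' y.
Proof.
  revert y; induction s as [|v s0 IH]; intros y Hu Hy.
  - exfalso; eapply aff_nil; eauto.
  - destruct s0 as [|b s1].
    + apply aff_single in Hy. subst. apply Hu. simpl; auto.
    + destruct (aff_decomp v (b :: s1) y b Hy (aff_head b s1)) as [y' [t [Hy' ->]]].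
      apply aff_comb3.
      * apply IH; auto. intros u Hu'. apply Hu. simpl; auto.
      * apply Hu; simpl; auto.
      * apply Hu; simpl; auto.
Qed.

Lemma aff_same s s' y : (forall u, In u s <-> In u s') -> (aff s y <-> aff s' y).
Proof. intros H; split; apply aff_incl; intros u Hu; apply aff_vertex, H; auto. Qed.

Lemma aff_inRm m s y : (forall v, In v s -> inRm m v) -> aff s y -> inRm m y.
Proof.
  intros Hv [l [L [_ ->]]]. revert l L Hv; induction s; intros l L Hv i Hi.
  - rewrite lincomb_nil_r. reflexivity.
  - destruct l; simpl in L; try discriminate. rewrite lincomb_cons. unfold vadd, vscal.
    rewrite (Hv a (or_introl eq_refl) i Hi). rewrite (IHs l ltac:(lia)); auto. ring.
    intros v Hv'; apply Hv; simpl; auto.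
Qed.

Lemma dot_vzero m u : dot m vzero u = 0.
Proof. unfold dot, vzero. transitivity (Sm (seq 0 m) (fun _ => 0)); [apply Sm_ext; intros; ring | apply Sm_0]. Qed.

Lemma aff_dot_const m s u K y : (forall v, In v s -> dot m v u = K) -> aff s y -> dot m y u = K.
Proof.
  intros Hv [l [L [Sl ->]]].
  assert (forall l, length l = length s -> dot m (lincomb l s) u = K * fold_right Rplus 0 l).
  { clear L Sl l. induction s; intros l L.
    - destruct l; simpl in L; try discriminate. rewrite lincomb_nil_r, dot_vzero. simpl; ring.
    - destruct l; simpl in L; try discriminate. rewrite lincomb_cons, dot_add_l, dot_scal_l.
      rewrite IHs by (auto; intros; apply Hv; simpl; auto). rewrite Hv by (simpl; auto). simpl. ring. }
  rewrite H, Sl by auto. ring.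
Qed.

Definition orth m s u := forall y z, aff s y -> aff s z -> dot m u (vsub y z) = 0.
Definition proj_spec m s x P := aff s P /\ orth m s (vsub x P).

Lemma pyth m s x P y : proj_spec m s x P -> aff s y ->
  dist m x y * dist m x y = dist m x P * dist m x P + dist m P y * dist m P y.
Proof.
  intros [HP Ho] Hy. rewrite !dist_sq.
  replace (vsub x y) with (vadd (vsub x P) (vsub P y)) by
    (apply functional_extensionality; intro; unfold vadd, vsub; ring).
  rewrite dot_add_l, !dot_add_r. rewrite (dot_comm m (vsub P y) (vsub x P)).
  rewrite (Ho P y HP Hy). ring.
Qed.

Lemma proj_min m s x P y : proj_spec m s x P -> aff s y -> dist m x P <= dist m x y.
Proof.
  intros H Hy. pose proof (pyth m s x P y H Hy).
  pose proof (dist_nonneg m x P). pose proof (dist_nonneg m x y). pose proof (dist_nonneg m P y).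
  nra.
Qed.

Lemma proj_dist m s x P : proj_spec m s x P -> dist_set m x (aff s) = dist m x P.
Proof.
  intros H. apply Rle_antisym.
  - apply dist_set_le. apply H.
  - apply dist_set_ge. exists P; apply H. intros y Hy. eapply proj_min; eauto.
Qed.

Lemma proj_single m w x : proj_spec m [w] x w.
Proof.
  split. apply aff_head. intros y z Hy Hz. apply aff_single in Hy, Hz. subst.
  replace (vsub w w) with vzero by (apply functional_extensionality; intro; unfold vsub, vzero; ring).
  rewrite dot_comm. apply dot_vzero.
Qed.

Lemma vsub_decomp y' z' t1 t2 w :
  vsub (vadd y' (vscal t1 w)) (vadd z' (vscal t2 w)) = vadd (vsub y' z') (vscal (t1 - t2) w).
Proof. apply functional_extensionality; intro; unfold vadd, vsub, vscal; ring. Qed.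

Lemma proj_step m s v x Px Pv : proj_spec m s x Px -> proj_spec m s v Pv ->
  dot m (vsub v Pv) (vsub v Pv) <> 0 ->
  proj_spec m (v :: s) x (vadd Px (vscal (dot m (vsub x Px) (vsub v Pv) / dot m (vsub v Pv) (vsub v Pv)) (vsub v Pv))).
Proof.
  intros [HPx Ox] [HPv Ov] Hw. set (w := vsub v Pv) in *.
  set (t := dot m (vsub x Px) w / dot m w w).
  split.
  - apply aff_comb3; [apply aff_cons; auto | apply aff_head | apply aff_cons; auto].
  - intros y z Hy Hz.
    destruct (aff_decomp v s y Pv Hy HPv) as [y' [t1 [Hy' ->]]].
    destruct (aff_decomp v s z Pv Hz HPv) as [z' [t2 [Hz' ->]]].
    fold w. rewrite vsub_decomp.
    replace (vsub x (vadd Px (vscal t w))) with (vsub (vsub x Px) (vscal t w)) by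
      (apply functional_extensionality; intro; unfold vadd, vsub, vscal; ring).
    rewrite dot_add_r, !(dot_sub_l m (vsub x Px) (vscal t w)), !dot_scal_l, !dot_scal_r.
    rewrite (Ox y' z' Hy' Hz'), (Ov y' z' Hy' Hz').
    unfold t. field. auto.
Qed.

Lemma proj_step0 m s v x Px Pv : proj_spec m s x Px -> proj_spec m s v Pv ->
  dot m (vsub v Pv) (vsub v Pv) = 0 -> proj_spec m (v :: s) x Px.
Proof.
  intros [HPx Ox] [HPv Ov] Hw. split. apply aff_cons; auto.
  intros y z Hy Hz.
  destruct (aff_decomp v s y Pv Hy HPv) as [y' [t1 [Hy' ->]]].
  destruct (aff_decomp v s z Pv Hz HPv) as [z' [t2 [Hz' ->]]].
  rewrite vsub_decomp, dot_add_r, dot_scal_r, (Ox y' z' Hy' Hz').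
  rewrite dot_comm, (dot_zero_any m _ _ Hw). ring.
Qed.

Lemma proj_exists m s : s <> [] -> forall x, exists P, proj_spec m s x P.
Proof.
  induction s as [|v s IH]; intros Hne x. congruence.
  destruct s as [|b s']. exists v. apply proj_single.
  destruct (IH ltac:(congruence) x) as [Px HPx].
  destruct (IH ltac:(congruence) v) as [Pv HPv].
  destruct (Req_dec (dot m (vsub v Pv) (vsub v Pv)) 0).
  - exists Px. eapply proj_step0; eauto.
  - eexists. eapply proj_step; eauto.
Qed.

Lemma dot_sub_sq m v c : dot m (vsub v c) (vsub v c) = dot m v v - 2 * dot m v c + dot m c c.
Proof. rewrite !dot_sub_l, !dot_sub_r, (dot_comm m c v). ring. Qed.

Lemma equidist_unique m s c1 c2 r1 r2 : aff s c1 -> aff s c2 ->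
  (forall v, In v s -> dist m v c1 * dist m v c1 = r1) ->
  (forall v, In v s -> dist m v c2 * dist m v c2 = r2) ->
  dot m (vsub c1 c2) (vsub c1 c2) = 0.
Proof.
  intros H1 H2 E1 E2.
  set (K := (dot m c1 c1 - dot m c2 c2 - (r1 - r2)) / 2).
  assert (HK : forall v, In v s -> dot m v (vsub c1 c2) = K).
  { intros v Hv. specialize (E1 v Hv). specialize (E2 v Hv). rewrite dist_sq, dot_sub_sq in E1, E2.
    rewrite dot_sub_r. unfold K. lra. }
  pose proof (aff_dot_const m s _ K c1 HK H1). pose proof (aff_dot_const m s _ K c2 HK H2).
  rewrite dot_sub_l. lra.
Qed.

Lemma sqrt_sq_eq x : 0 <= x -> sqrt (x * x) = x.
Proof. intros; apply sqrt_square; auto. Qed.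

Lemma circ_char m s C Rad : s <> [] -> (forall v, In v s -> inRm m v) ->
  (exists v w, In v s /\ In w s /\ v <> w) ->
  circumscribes m s C Rad ->
  exists c0, proj_spec m s C c0 /\ circumcentre m s = c0 /\
    0 < circumradius m s /\
    circumradius m s * circumradius m s + dist m C c0 * dist m C c0 = Rad * Rad /\
    (forall v, In v s -> dist m c0 v = circumradius m s).
Proof.
  intros Hne Hin [v0 [w0 [Hv0 [Hw0 Hvw]]]] [HCin [HRad HC]].
  destruct (proj_exists m s Hne C) as [c0 Hc0].
  assert (c0in : inRm m c0) by (eapply aff_inRm; eauto; apply Hc0).
  set (rho := Rad * Rad - dist m C c0 * dist m C c0).
  assert (Hrho : forall v, In v s -> dist m c0 v * dist m c0 v = rho).
  { intros v Hv. pose proof (pyth m s C c0 v Hc0 (aff_vertex s v Hv)). rewrite HC in H by auto.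
    unfold rho. lra. }
  assert (rho_pos : 0 < rho).
  { pose proof (Hrho v0 Hv0). pose proof (dist_nonneg m c0 v0).
    destruct (Rle_lt_dec rho 0); auto. exfalso.
    assert (dist m c0 v0 = 0) by nra.
    pose proof (Hrho w0 Hw0). pose proof (dist_nonneg m c0 w0).
    assert (dist m c0 w0 = 0) by nra.
    apply (dist_zero m) in H1; auto. apply (dist_zero m) in H4; auto. congruence. }
  set (r0 := sqrt rho).
  assert (r0sq : r0 * r0 = rho) by (apply sqrt_sqrt; lra).
  assert (r0pos : 0 < r0) by (apply sqrt_lt_R0; lra).
  assert (Hcirc0 : circumscribes m s c0 r0).
  { split; auto. split; auto. intros v Hv. pose proof (Hrho v Hv). pose proof (dist_nonneg m c0 v).
    unfold r0. rewrite <- H. apply eq_sym, sqrt_sq_eq; auto. }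
  assert (Key : forall c' r', circumscribes m s c' r' -> c' = c' /\ r' * r' = rho + dist m c' c0 * dist m c' c0).
  { intros c' r' [Hc'in [Hr' Hc']].
    destruct (proj_exists m s Hne c') as [c'' Hc''].
    assert (E : forall v, In v s -> dist m v c'' * dist m v c'' = r' * r' - dist m c' c'' * dist m c' c'').
    { intros v Hv. pose proof (pyth m s c' c'' v Hc'' (aff_vertex s v Hv)). rewrite Hc' in H by auto.
      rewrite dist_sym. lra. }
    assert (E0 : forall v, In v s -> dist m v c0 * dist m v c0 = rho).
    { intros v Hv. rewrite dist_sym. auto. }
    pose proof (equidist_unique m s c'' c0 _ _ (proj1 Hc'') (proj1 Hc0) E E0).
    assert (c'' = c0).
    { apply (dist_zero m); auto. eapply aff_inRm; eauto; apply Hc''. rewrite dist_nrm. unfold nrm. rewrite H. apply sqrt_0. }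
    subst c''. split; auto. pose proof (E v0 Hv0). pose proof (E0 v0 Hv0). lra. }
  assert (Hic : is_circ m s (c0, r0)).
  { split; auto. intros c' r' Hc'. simpl. destruct (Key c' r' Hc') as [_ K].
    destruct Hc' as [_ [Hr' _]]. pose proof (dist_nonneg m c' c0).
    destruct (Rle_lt_dec r0 r'); auto. nra. }
  assert (Hcirc : is_circ m s (circ m s)) by (unfold circ; apply epsilon_spec; eauto).
  destruct (circ m s) as [c1 r1] eqn:Ec.
  destruct Hcirc as [Hc1 Hmin]. simpl in Hc1, Hmin.
  pose proof (Hmin c0 r0 Hcirc0). destruct (Key c1 r1 Hc1) as [_ K1].
  pose proof (dist_nonneg m c1 c0).
  destruct Hc1 as [c1in [r1pos Hc1v]].
  assert (r1 = r0) by nra.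
  assert (dist m c1 c0 = 0) by (subst r1; nra).
  apply (dist_zero m) in H2; auto. subst c1 r1.
  exists c0. unfold circumcentre, circumradius. rewrite Ec. simpl.
  split; auto. split; auto. split; auto. split.
  - rewrite r0sq. unfold rho. ring.
  - intros v Hv. destruct Hcirc0 as [_ [_ X]]. auto.
Qed.

Lemma rem_in p s u : In u (remove_pt p s) <-> In u s /\ u <> p.
Proof. unfold remove_pt. split. apply in_remove. intros [H1 H2]. apply in_in_remove; auto. Qed.

Lemma rem_nodup p s : NoDup s -> NoDup (remove_pt p s).
Proof.
  unfold remove_pt. induction s; intros H; simpl. constructor.
  inversion H; subst. destruct (pt_eq_dec p a). auto.
  constructor; auto. intros Hin. apply in_remove in Hin. tauto.
Qed.

Lemma rem_len p s : NoDup s -> In p s -> length (remove_pt p s) = (length s - 1)%nat.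
Proof.
  unfold remove_pt. induction s; intros H Hp; simpl. contradiction.
  inversion H; subst. destruct (pt_eq_dec p a).
  - subst. rewrite notin_remove; auto. lia.
  - simpl. destruct Hp as [->|Hp]. congruence. rewrite IHs; auto.
    destruct s. contradiction. simpl; lia.
Qed.

Definition pairs m s d := exists x y, In x s /\ In y s /\ x <> y /\ d = dist m x y.

Lemma sum_ge_elem (f : Pt -> R) l u : (forall x, 0 <= f x) -> In u l -> f u <= fold_right Rplus 0 (map f l).
Proof. intros H; induction l; simpl; intros Hu. contradiction.
  assert (0 <= fold_right Rplus 0 (map f l)). { clear -H. induction l; simpl. lra. pose proof (H a); lra. }
  destruct Hu as [->|Hu]. lra. pose proof (H a). specialize (IHl Hu). lra. Qed.

Lemma pairs_bound m s : bound (pairs m s).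
Proof.
  destruct s as [|s0 s']. exists 0. intros d [x [y [Hx _]]]. contradiction.
  exists (2 * fold_right Rplus 0 (map (fun u => dist m u s0) (s0 :: s'))).
  intros d [x [y [Hx [Hy [_ ->]]]]].
  pose proof (sum_ge_elem (fun u => dist m u s0) _ x (fun u => dist_nonneg m u s0) Hx).
  pose proof (sum_ge_elem (fun u => dist m u s0) _ y (fun u => dist_nonneg m u s0) Hy).
  simpl in H, H0. pose proof (dist_triangle m x s0 y). rewrite (dist_sym m s0 y) in H1. simpl. lra.
Qed.

Lemma Lmax_ge m s x y : In x s -> In y s -> x <> y -> dist m x y <= Lmax m s.
Proof. intros. unfold Lmax. destruct (Sup_spec (pairs m s)) as [H2 _].
  exists (dist m x y); exists x, y; auto. apply pairs_bound. apply H2. exists x, y; auto. Qed.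

Lemma Lmax_le m s B : (exists x y, In x s /\ In y s /\ x <> y) ->
  (forall x y, In x s -> In y s -> x <> y -> dist m x y <= B) -> Lmax m s <= B.
Proof. intros [x [y [Hx [Hy Hxy]]]] H. unfold Lmax. destruct (Sup_spec (pairs m s)) as [_ H2].
  exists (dist m x y); exists x, y; auto. apply pairs_bound. apply H2. intros d [a [b [Ha [Hb [Hab ->]]]]]. auto. Qed.

Lemma lmin_le m s x y : In x s -> In y s -> x <> y -> lmin m s <= dist m x y.
Proof. intros. unfold lmin. destruct (Inf_spec (pairs m s)) as [H2 _].
  exists (dist m x y); exists x, y; auto. exists 0. intros d [a [b [_ [_ [_ ->]]]]]. apply dist_nonneg.
  apply H2. exists x, y; auto. Qed.

Lemma lmin_ge m s B : (exists x y, In x s /\ In y s /\ x <> y) ->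
  (forall x y, In x s -> In y s -> x <> y -> B <= dist m x y) -> B <= lmin m s.
Proof. intros [x [y [Hx [Hy Hxy]]]] H. unfold lmin. destruct (Inf_spec (pairs m s)) as [_ H2].
  exists (dist m x y); exists x, y; auto. exists 0. intros d [a [b [_ [_ [_ ->]]]]]. apply dist_nonneg.
  apply H2. intros d [a [b [Ha [Hb [Hab ->]]]]]. auto. Qed.

Lemma Lmax_same m s s' : (forall u, In u s <-> In u s') -> Lmax m s = Lmax m s'.
Proof. intros H. unfold Lmax. f_equal. apply functional_extensionality; intro d.
  apply PropExtensionality.propositional_extensionality.
  split; intros [x [y [Hx [Hy R]]]]; exists x, y; rewrite ?H in *; rewrite <- ?H in *; auto. Qed.

Lemma altitude_same m q s s' : (forall u, In u s <-> In u s') -> altitude m q s = altitude m q s'.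
Proof. intros H. unfold altitude. f_equal. apply functional_extensionality; intro y.
  apply PropExtensionality.propositional_extensionality. apply aff_same.
  intros u. rewrite !rem_in, H. tauto. Qed.

Lemma thick_eq m t k : (length t - 1)%nat = S k ->
  thickness m t = Inf (fun th => exists p, In p t /\ th = altitude m p t / (INR (S k) * Lmax m t)).
Proof. intros H. unfold thickness. rewrite H. reflexivity. Qed.

Lemma fin_lb (f : Pt -> R) l : exists b, forall x, In x l -> b <= f x.
Proof. induction l as [|a l [b Hb]]. exists 0; intros x []. exists (Rmin (f a) b).
  intros x [<-|Hx]. apply Rmin_l. pose proof (Hb x Hx). pose proof (Rmin_r (f a) b). lra. Qed.

Lemma thick_good_elem m t k c x : (length t - 1)%nat = S k -> thickness m t >= c -> In x t ->
  altitude m x t / (INR (S k) * Lmax m t) >= c.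
Proof.
  intros Hl Ht Hx. rewrite (thick_eq m t k Hl) in Ht.
  destruct (Inf_spec (fun th => exists p, In p t /\ th = altitude m p t / (INR (S k) * Lmax m t))) as [H1 _].
  - eauto.
  - destruct (fin_lb (fun p => altitude m p t / (INR (S k) * Lmax m t)) t) as [b Hb].
    exists b. intros y [p [Hp ->]]. auto.
  - assert (Inf (fun th => exists p, In p t /\ th = altitude m p t / (INR (S k) * Lmax m t)) <=
      altitude m x t / (INR (S k) * Lmax m t)) by (apply H1; eauto). lra.
Qed.

Lemma thick_bad_elem m t k c : (length t - 1)%nat = S k -> thickness m t < c -> t <> [] ->
  exists x, In x t /\ altitude m x t / (INR (S k) * Lmax m t) < c.
Proof.
  intros Hl Ht Hne. rewrite (thick_eq m t k Hl) in Ht.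
  destruct (Inf_spec (fun th => exists p, In p t /\ th = altitude m p t / (INR (S k) * Lmax m t))) as [_ H2].
  - destruct t. congruence. eexists; exists p; split; simpl; eauto.
  - destruct (fin_lb (fun p => altitude m p t / (INR (S k) * Lmax m t)) t) as [b Hb].
    exists b. intros y [p [Hp ->]]. auto.
  - apply NNPP. intros Hn.
    assert (c <= Inf (fun th => exists p, In p t /\ th = altitude m p t / (INR (S k) * Lmax m t))).
    { apply H2. intros y [p [Hp ->]]. apply Rnot_lt_le. intros Hlt. apply Hn. eauto. }
    lra.
Qed.

Lemma len1 (l : list Pt) : length l = 1%nat -> exists w, l = [w].
Proof. destruct l as [|a [|b l]]; simpl; intros H; try discriminate. eauto. Qed.

Lemma alt_two m q s : NoDup s -> In q s -> length s = 2%nat ->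
  exists w, In w s /\ w <> q /\ altitude m q s = dist m q w /\
     (forall u, In u s -> u = q \/ u = w).
Proof.
  intros Hnd Hq Hl. pose proof (rem_len q s Hnd Hq). rewrite Hl in H. simpl in H.
  destruct (len1 _ H) as [w Hw].
  assert (Hw' : In w (remove_pt q s)) by (rewrite Hw; simpl; auto).
  apply rem_in in Hw'. exists w. split. tauto. split. tauto. split.
  - unfold altitude. rewrite Hw. apply (proj_dist m [w] q w). apply proj_single.
  - intros u Hu. destruct (pt_eq_dec u q). auto. right.
    assert (In u (remove_pt q s)) by (apply rem_in; auto). rewrite Hw in H0. destruct H0 as [|[]]. auto.
Qed.

Lemma simplex_two m s q : simplex m s -> In q s -> (2 <= length s)%nat ->
  exists w, In w s /\ w <> q /\ 0 < dist m q w.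
Proof.
  intros [Hne [Hnd Hin]] Hq Hl.
  pose proof (rem_len q s Hnd Hq).
  destruct (remove_pt q s) as [|w r] eqn:E. simpl in H; lia.
  assert (Hw : In w (remove_pt q s)) by (rewrite E; simpl; auto). apply rem_in in Hw.
  exists w. split. tauto. split. tauto.
  pose proof (dist_nonneg m q w). destruct (Req_dec (dist m q w) 0) as [Z|Z]; [|lra].
  apply (dist_zero m) in Z; try (apply Hin; tauto). destruct Hw; congruence.
Qed.

Lemma flake_data m G0 tau : simplex m tau -> flake m G0 tau -> 0 < G0 <= 1 ->
  exists q k, In q tau /\ length tau = S (S (S k)) /\
    altitude m q tau < G0 ^ (S (S k)) * INR (S (S k)) * Lmax m tau /\ 0 < Lmax m tau.
Proof.
  intros Hs [Hbad Hprop] HG. unfold bad, good in Hbad.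
  apply not_all_ex_not in Hbad. destruct Hbad as [t Ht].
  apply imply_to_and in Ht. destruct Ht as [Hface Hth]. apply Rnot_ge_lt in Hth.
  destruct (Nat.lt_ge_cases (length t) (length tau)) as [Hlt|Hge].
  { exfalso. specialize (Hprop t Hface Hlt). destruct Hface as [Htne [Htnd Hincl]].
    specialize (Hprop t (conj Htne (conj Htnd (incl_refl t)))). lra. }
  destruct Hs as [Hne [Hnd Hin]]. destruct Hface as [Htne [Htnd Hincl]].
  pose proof (NoDup_incl_length Htnd Hincl).
  assert (Hincl' : incl tau t) by (apply NoDup_length_incl; auto).
  assert (Hsame : forall u, In u t <-> In u tau) by (split; [apply Hincl|apply Hincl']).
  destruct (length t - 1)%nat as [|k] eqn:E.
  { unfold thickness in Hth. rewrite E in Hth. simpl in Hth. lra. }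
  destruct (thick_bad_elem m t k _ E Hth Htne) as [q [Hq Hlt]].
  rewrite (altitude_same m q t tau Hsame), (Lmax_same m t tau Hsame) in Hlt.
  apply Hsame in Hq.
  destruct (simplex_two m tau q (conj Hne (conj Hnd Hin)) Hq ltac:(lia)) as [w [Hw [Hwq Hdw]]].
  assert (HL : 0 < Lmax m tau) by (pose proof (Lmax_ge m tau q w Hq Hw (not_eq_sym Hwq)); lra).
  assert (HINR : 0 < INR (S k)) by (apply lt_0_INR; lia).
  assert (Halt : altitude m q tau < G0 ^ S k * INR (S k) * Lmax m tau).
  { apply Rmult_lt_compat_r with (r := INR (S k) * Lmax m tau) in Hlt; [|apply Rmult_lt_0_compat; auto].
    replace (altitude m q tau / (INR (S k) * Lmax m tau) * (INR (S k) * Lmax m tau)) with (altitude m q tau) in Hlt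
      by (field; lra). lra. }
  destruct k as [|k].
  - exfalso. assert (length tau = 2%nat) by lia.
    destruct (alt_two m q tau Hnd Hq H0) as [w' [Hw' [Hwq' [Ea Hall]]]].
    assert (Lmax m tau <= dist m q w').
    { apply Lmax_le. eauto. intros x y Hx Hy Hxy.
      destruct (Hall x Hx) as [->| ->]; destruct (Hall y Hy) as [->| ->]; try congruence; try lra.
      rewrite dist_sym; lra. }
    rewrite Ea in Halt. simpl in Halt. nra.
  - exists q, k. split; auto. split. lia. split; auto.
Qed.

Lemma dist_set_nonneg m x (S : Pt -> Prop) : (exists y, S y) -> 0 <= dist_set m x S.
Proof. intros H. apply dist_set_ge; auto. intros; apply dist_nonneg. Qed.

Lemma alt_cons_sq m s x v Px Pv : proj_spec m s x Px -> proj_spec m s v Pv ->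
  dot m (vsub v Pv) (vsub v Pv) <> 0 ->
  dist_set m x (aff (v :: s)) * dist_set m x (aff (v :: s)) * dot m (vsub v Pv) (vsub v Pv) =
  dot m (vsub x Px) (vsub x Px) * dot m (vsub v Pv) (vsub v Pv) - (dot m (vsub x Px) (vsub v Pv))^2.
Proof.
  intros Hx Hv Hw. rewrite (proj_dist m _ _ _ (proj_step m s v x Px Pv Hx Hv Hw)). rewrite dist_sq.
  set (w := vsub v Pv) in *. set (u := vsub x Px).
  set (t := dot m u w / dot m w w).
  replace (vsub x (vadd Px (vscal t w))) with (vsub u (vscal t w)) by
    (apply functional_extensionality; intro; unfold u, vadd, vsub, vscal; ring).
  rewrite !dot_sub_l, !dot_sub_r, !dot_scal_l, !dot_scal_r. rewrite (dot_comm m w u).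
  unfold t. field. auto.
Qed.

Lemma alt_identity m tau p q : In p tau -> In q tau -> p <> q ->
  remove_pt q (remove_pt p tau) <> [] ->
  altitude m p tau * altitude m q (remove_pt p tau) <=
  altitude m q tau * dist_set m p (aff (remove_pt q (remove_pt p tau))).
Proof.
  intros Hp Hq Hpq Hne. set (s := remove_pt q (remove_pt p tau)) in *.
  assert (Hs : forall u, In u s <-> In u tau /\ u <> p /\ u <> q) by (intros u; unfold s; rewrite !rem_in; tauto).
  assert (E1 : aff (remove_pt p tau) = aff (q :: s)).
  { apply functional_extensionality; intro y. apply propositional_extensionality. apply aff_same.
    intros u. rewrite rem_in. simpl. rewrite Hs. split.
    - intros [H1 H2]. destruct (pt_eq_dec q u); [left; auto | right; split; auto].
    - intros [<-|H]. split; auto. tauto. }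
  assert (E2 : aff (remove_pt q tau) = aff (p :: s)).
  { apply functional_extensionality; intro y. apply propositional_extensionality. apply aff_same.
    intros u. rewrite rem_in. simpl. rewrite Hs. split.
    - intros [H1 H2]. destruct (pt_eq_dec p u); [left; auto | right; split; auto].
    - intros [<-|H]. split; auto. tauto. }
  destruct (proj_exists m s Hne p) as [Pp HPp].
  destruct (proj_exists m s Hne q) as [Pq HPq].
  assert (Ea : altitude m q (remove_pt p tau) = dist m q Pq) by (apply (proj_dist m s q Pq HPq)).
  assert (Eb : dist_set m p (aff s) = dist m p Pp) by (apply (proj_dist m s p Pp HPp)).
  rewrite Ea, Eb.
  assert (Hh : altitude m p tau = dist_set m p (aff (q :: s))) by (unfold altitude; rewrite E1; auto).
  assert (HD : altitude m q tau = dist_set m q (aff (p :: s))) by (unfold altitude; rewrite E2; auto).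
  assert (h0 : 0 <= altitude m p tau) by (rewrite Hh; apply dist_set_nonneg; exists q; apply aff_head).
  assert (D0 : 0 <= altitude m q tau) by (rewrite HD; apply dist_set_nonneg; exists p; apply aff_head).
  pose proof (dist_nonneg m p Pp). pose proof (dist_nonneg m q Pq).
  pose proof (dist_sq m q Pq) as Sq. pose proof (dist_sq m p Pp) as Sp.
  destruct (Req_dec (dot m (vsub q Pq) (vsub q Pq)) 0) as [Zq|Zq].
  { assert (dist m q Pq = 0) by nra. rewrite H1. nra. }
  pose proof (alt_cons_sq m s p q Pp Pq HPp HPq Zq) as I1. rewrite <- Hh in I1.
  destruct (Req_dec (dot m (vsub p Pp) (vsub p Pp)) 0) as [Zp|Zp].
  { rewrite Zp, (dot_zero_any m _ _ Zp) in I1. assert (altitude m p tau * dist m q Pq = 0) by nra.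
    rewrite H1. nra. }
  pose proof (alt_cons_sq m s q p Pq Pp HPq HPp Zp) as I2. rewrite <- HD in I2.
  rewrite (dot_comm m (vsub q Pq) (vsub p Pp)) in I2.
  assert (A1 : (altitude m p tau * dist m q Pq) * (altitude m p tau * dist m q Pq) =
     dot m (vsub p Pp) (vsub p Pp) * dot m (vsub q Pq) (vsub q Pq) - dot m (vsub p Pp) (vsub q Pq) ^ 2).
  { rewrite <- I1, <- Sq. ring. }
  assert (A2 : (altitude m q tau * dist m p Pp) * (altitude m q tau * dist m p Pp) =
     dot m (vsub p Pp) (vsub p Pp) * dot m (vsub q Pq) (vsub q Pq) - dot m (vsub p Pp) (vsub q Pq) ^ 2).
  { rewrite <- Sp. rewrite Sp. transitivity (altitude m q tau * altitude m q tau * dot m (vsub p Pp) (vsub p Pp)).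
    rewrite <- Sp; ring. rewrite I2. ring. }
  assert (Eq : (altitude m p tau * dist m q Pq) * (altitude m p tau * dist m q Pq) =
               (altitude m q tau * dist m p Pp) * (altitude m q tau * dist m p Pp)) by lra.
  assert (0 <= altitude m p tau * dist m q Pq) by (apply Rmult_le_pos; auto).
  assert (0 <= altitude m q tau * dist m p Pp) by (apply Rmult_le_pos; auto).
  nra.
Qed.

Lemma pow_small G n : 0 <= G <= 1/2 -> INR (S n) * G ^ n <= 1.
Proof.
  intros HG. induction n. simpl. lra.
  rewrite S_INR in *. rewrite S_INR. simpl. pose proof (pow_le G n (proj1 HG)).
  pose proof (pos_INR n).
  assert ((INR n + 1 + 1) * (G * G ^ n) <= (INR n + 1 + 1) * (1/2 * G ^ n)) by
    (apply Rmult_le_compat_l; [lra|]; apply Rmult_le_compat_r; lra).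
  nra.
Qed.

Lemma circ_num a r0 H s Rad : 0 <= a -> 0 < r0 -> 0 <= H -> 0 <= s -> 0 < Rad ->
  s * s = a * a + H * H -> Rad * Rad = r0 * r0 + H * H ->
  Rabs (a - r0) * r0 <= Rabs (s - Rad) * (2 * Rad).
Proof.
  intros Ha Hr HH Hs HR Es ER.
  assert (HRr : r0 <= Rad) by nra.
  assert (HHR : H <= Rad) by nra.
  assert (Hsa : s <= a + H) by nra.
  assert (K : Rabs (a - r0) * (a + r0) = Rabs (s - Rad) * (s + Rad)).
  { rewrite <- (Rabs_pos_eq (a + r0)) by lra. rewrite <- (Rabs_pos_eq (s + Rad)) by lra.
    rewrite <- !Rabs_mult. f_equal. nra. }
  pose proof (Rabs_pos (a - r0)). pose proof (Rabs_pos (s - Rad)).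
  assert (Rabs (a - r0) * (a + r0) * r0 <= Rabs (s - Rad) * (2 * Rad) * (a + r0)).
  { rewrite K. assert (Rabs (s - Rad) * (s + Rad) * r0 <= Rabs (s - Rad) * (a + 2 * Rad) * r0) by
      (apply Rmult_le_compat_r; [lra|]; apply Rmult_le_compat_l; lra).
    assert (Rabs (s - Rad) * (a + 2 * Rad) * r0 <= Rabs (s - Rad) * (2 * Rad) * (a + r0)) by
      (replace (Rabs (s - Rad) * (a + 2 * Rad) * r0) with (Rabs (s - Rad) * ((a + 2 * Rad) * r0)) by ring;
       replace (Rabs (s - Rad) * (2 * Rad) * (a + r0)) with (Rabs (s - Rad) * (2 * Rad * (a + r0))) by ring;
       apply Rmult_le_compat_l; nra).
    lra. }
  apply Rmult_le_reg_r with (a + r0). lra. nra.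
Qed.

Lemma final_num eps mu d0 G0 h dl r0 Rad X : 0 < eps -> 0 < mu <= 1 -> 0 <= d0 -> 0 < G0 ->
  0 <= h -> h <= 27/2 * G0 * eps / mu -> 0 <= dl -> dl <= 2 * d0 * r0 -> mu * eps / 2 <= r0 ->
  0 < Rad -> Rad < 3/2 * eps -> X <= h + (dl + h) * (2 * Rad / r0) ->
  X <= (14 / mu * d0 + 216 / mu ^ 3 * G0) * r0.
Proof.
  intros He Hm Hd HG Hh0 Hh Hdl0 Hdl Hr HR0 HR HX.
  assert (Hr0 : 0 < r0) by nra.
  assert (E1 : eps <= 2 * r0 / mu) by (apply Rmult_le_reg_r with mu; [lra|]; field_simplify; lra).
  assert (T1 : dl * (2 * Rad / r0) <= 14 / mu * d0 * r0).
  { assert (dl * (2 * Rad / r0) <= 2 * d0 * r0 * (2 * Rad / r0)) by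
      (apply Rmult_le_compat_r; [apply Rmult_le_pos; [lra|]; left; apply Rinv_0_lt_compat; lra | lra]).
    replace (2 * d0 * r0 * (2 * Rad / r0)) with (4 * d0 * Rad) in H by (field; lra).
    assert (4 * d0 * Rad <= 6 * d0 * eps) by nra.
    assert (6 * d0 * eps <= 12 * d0 * r0 / mu).
    { replace (12 * d0 * r0 / mu) with (6 * d0 * (2 * r0 / mu)) by (field; lra). nra. }
    assert (12 * d0 * r0 / mu <= 14 / mu * d0 * r0).
    { replace (14 / mu * d0 * r0) with (12 * d0 * r0 / mu + 2 * d0 * r0 / mu) by (field; lra).
      assert (0 <= 2 * d0 * r0 / mu) by (apply Rmult_le_pos; [nra|]; left; apply Rinv_0_lt_compat; lra). lra. }
    lra. }
  assert (T2 : h + h * (2 * Rad / r0) <= 216 / mu ^ 3 * G0 * r0).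
  { assert (2 * Rad / r0 <= 6 / mu).
    { apply Rmult_le_reg_r with (r0 * mu). nra. field_simplify; try lra. nra. }
    assert (1 <= 1 / mu) by (apply Rmult_le_reg_r with mu; [lra|]; field_simplify; lra).
    assert (h + h * (2 * Rad / r0) <= h * (7 / mu)).
    { replace (h * (7 / mu)) with (h * (1/mu) + h * (6 / mu)) by (field; lra).
      assert (h <= h * (1/mu)) by nra. assert (h * (2 * Rad / r0) <= h * (6/mu)) by nra. lra. }
    assert (h * (7 / mu) <= 27/2 * G0 * eps / mu * (7 / mu)) by (apply Rmult_le_compat_r; [|lra]; left; apply Rmult_lt_0_compat; [lra|apply Rinv_0_lt_compat; lra]).
    assert (27/2 * G0 * eps / mu * (7 / mu) <= 27/2 * G0 * (2 * r0 / mu) / mu * (7 / mu)).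
    { unfold Rdiv. apply Rmult_le_compat_r. left; apply Rmult_lt_0_compat; [lra|apply Rinv_0_lt_compat; lra].
      apply Rmult_le_compat_r. left; apply Rinv_0_lt_compat; lra. apply Rmult_le_compat_l. lra. exact E1. }
    assert (27/2 * G0 * (2 * r0 / mu) / mu * (7 / mu) <= 216 / mu ^ 3 * G0 * r0).
    { replace (27/2 * G0 * (2 * r0 / mu) / mu * (7 / mu)) with (189 * (G0 * r0 / mu^3)) by (field; lra).
      replace (216 / mu ^ 3 * G0 * r0) with (216 * (G0 * r0 / mu^3)) by (field; lra).
      assert (0 <= G0 * r0 / mu ^ 3). { apply Rmult_le_pos. nra. left; apply Rinv_0_lt_compat. apply pow_lt; lra. }
      lra. }
    lra. }
  nra.
Qed.

Theorem mainTheorem9 (m : nat) (eps' mu' G0 : R) (tau : list Pt) :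
  0 < eps' -> 0 < mu' <= 1 -> 0 < G0 <= 1 ->
  simplex m tau -> flake m G0 tau ->
  Lmax m tau <= 3 * eps' -> lmin m tau >= mu' * eps' ->
  forall (p C : Pt) (Rad delta0 : R),
    In p tau ->
    circumscribes m (remove_pt p tau) C Rad ->
    Rad < 3 / 2 * eps' ->
    0 <= delta0 ->
    dist_set m p (sphere m C Rad) <= delta0 * lmin m (remove_pt p tau) ->
    dist_set m p (circumsphere m (remove_pt p tau)) <=
      (14 / mu' * delta0 + 216 / mu' ^ 3 * G0) * circumradius m (remove_pt p tau).
Proof.
  intros He Hmu HG Hsimp Hflake HL Hl p C Rad d0 Hp Hcirc HRad Hd0 Hdel.
  destruct (flake_data m G0 tau Hsimp Hflake HG) as [q [k [Hq [Hlen [Halt HL0]]]]].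
  pose proof Hsimp as [Hne [Hnd Hin]].
  set (tp := remove_pt p tau) in *.
  assert (Htp : forall u, In u tp <-> In u tau /\ u <> p) by (intro; apply rem_in).
  assert (Hlenp : length tp = S (S k)) by (unfold tp; rewrite rem_len; auto; lia).
  assert (Hsp : simplex m tp).
  { split. intros E; rewrite E in Hlenp; discriminate. split. apply rem_nodup; auto.
    intros v Hv; apply Hin, Htp; auto. }
  assert (Hinp : forall v, In v tp -> inRm m v) by (apply Hsp).
  destruct tp as [|w1 tr] eqn:Etp; [discriminate|].
  assert (Hw1 : In w1 tp) by (rewrite Etp; simpl; auto).
  rewrite <- Etp in *.
  destruct (simplex_two m tp w1 Hsp Hw1 ltac:(lia)) as [w2 [Hw2 [Hw21 Hdw]]].
  assert (Htpne : tp <> []) by (rewrite Etp; discriminate).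
  destruct (circ_char m tp C Rad Htpne Hinp (ex_intro _ w1 (ex_intro _ w2 (conj Hw1 (conj Hw2 (not_eq_sym Hw21))))) Hcirc)
    as [c0 [Hc0 [Ecc [Hr0 [Er0 Hc0v]]]]].
  set (r0 := circumradius m tp) in *.
  assert (Hlp1 : lmin m tau <= lmin m tp).
  { apply lmin_ge. exists w1, w2; auto. intros x y Hx Hy Hxy. apply lmin_le; auto; apply Htp; auto. }
  assert (Hlp2 : lmin m tp <= 2 * r0).
  { pose proof (lmin_le m tp w1 w2 Hw1 Hw2 (not_eq_sym Hw21)). pose proof (dist_triangle m w1 c0 w2).
    rewrite (dist_sym m w1 c0), !Hc0v in H0 by auto. lra. }
  assert (Hr0l : mu' * eps' / 2 <= r0) by lra.
  destruct Hcirc as [HCin [HRad0 HCv]].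
  assert (Hdl : Rabs (dist m p C - Rad) <= d0 * lmin m tp).
  { eapply Rle_trans; [|exact Hdel]. apply dist_set_ge.
    exists w1. split; auto. rewrite dist_sym; auto.
    intros z [Hzin Hz]. rewrite dist_sym in Hz. rewrite <- Hz. try rewrite (dist_sym m C p). apply (dist_rev m p z C). }
  destruct (proj_exists m tp Htpne p) as [ps Hps].
  assert (Hh : altitude m p tau = dist m p ps) by (unfold altitude; fold tp; apply (proj_dist m tp p ps Hps)).
  set (h := dist m p ps) in *.
  set (a := dist m c0 ps).
  assert (psin : inRm m ps) by (eapply aff_inRm; eauto; apply Hps).
  assert (c0in : inRm m c0) by (eapply aff_inRm; eauto; apply Hc0).
  assert (Hy : exists y, circumsphere m tp y /\ dist m ps y <= Rabs (a - r0)).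
  { destruct (Req_dec a 0) as [Za|Za].
    - exists w1. split. split. split; auto. rewrite Ecc. auto. apply aff_vertex; auto.
      pose proof (dist_triangle m ps c0 w1). rewrite (dist_sym m ps c0) in H. fold a in H. rewrite Hc0v in H by auto.
      rewrite Za, Rminus_0_l, Rabs_Ropp, Rabs_pos_eq by lra. lra.
    - assert (Ha : 0 < a) by (pose proof (dist_nonneg m c0 ps); unfold a in *; lra).
      set (y := vadd c0 (vscal (r0 / a) (vsub ps c0))).
      assert (Hya : aff tp y) by (apply aff_comb3; [apply Hc0|apply Hps|apply Hc0]).
      assert (Ea2 : dot m (vsub ps c0) (vsub ps c0) = a * a).
      { unfold a. rewrite dist_sym, dist_sq. reflexivity. }
      exists y. split. split. split. eapply aff_inRm; eauto. rewrite Ecc.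
      + assert (dist m c0 y * dist m c0 y = r0 * r0).
        { rewrite dist_sq. replace (vsub c0 y) with (vscal (- (r0 / a)) (vsub ps c0)) by
            (apply functional_extensionality; intro; unfold y, vadd, vscal, vsub; ring).
          rewrite dot_scal_l, dot_scal_r, Ea2. field. lra. }
        pose proof (dist_nonneg m c0 y). fold r0. apply Rle_antisym; nra.
      + auto.
      + assert (dist m ps y * dist m ps y = (a - r0) * (a - r0)).
        { rewrite dist_sq. replace (vsub ps y) with (vscal (1 - r0 / a) (vsub ps c0)) by
            (apply functional_extensionality; intro; unfold y, vadd, vscal, vsub; ring).
          rewrite dot_scal_l, dot_scal_r, Ea2. field. lra. }
        pose proof (dist_nonneg m ps y). pose proof (Rabs_pos (a - r0)).
        assert ((a - r0) * (a - r0) = Rabs (a - r0) * Rabs (a - r0)) by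
          (rewrite <- Rabs_mult; rewrite Rabs_pos_eq; nra).
        nra. }
  destruct Hy as [y [Hycs Hyd]].
  assert (Hpy := pyth m tp C c0 ps Hc0 (proj1 Hps)).
  assert (Hcn := circ_num a r0 (dist m C c0) (dist m ps C) Rad (dist_nonneg m c0 ps) Hr0 (dist_nonneg m C c0)
     (dist_nonneg m ps C) HRad0).
  assert (Hcn' : Rabs (a - r0) * r0 <= Rabs (dist m ps C - Rad) * (2 * Rad)).
  { apply Hcn. rewrite (dist_sym m ps C), Hpy. unfold a. ring. lra. }
  assert (Hsr : Rabs (dist m ps C - Rad) <= Rabs (dist m p C - Rad) + h).
  { pose proof (dist_rev m ps p C). rewrite (dist_sym m ps p) in H. fold h in H.
    replace (dist m ps C - Rad) with ((dist m ps C - dist m p C) + (dist m p C - Rad)) by ring.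
    pose proof (Rabs_triang (dist m ps C - dist m p C) (dist m p C - Rad)). lra. }
  assert (HX : dist_set m p (circumsphere m tp) <= h + (Rabs (dist m p C - Rad) + h) * (2 * Rad / r0)).
  { pose proof (dist_set_le m p (circumsphere m tp) y Hycs). pose proof (dist_triangle m p ps y).
    assert (Rabs (a - r0) <= (Rabs (dist m p C - Rad) + h) * (2 * Rad / r0)).
    { apply Rmult_le_reg_r with r0; auto. unfold Rdiv. rewrite (Rmult_assoc _ (2 * Rad * / r0)), Rmult_assoc,  Rinv_l by lra.
      pose proof (Rabs_pos (dist m ps C - Rad)). nra. }
    change (dist m p ps) with h in H0. lra. }
  assert (Hw1tau : In w1 tau /\ w1 <> p) by (apply Htp; auto).
  assert (Hw2tau : In w2 tau /\ w2 <> p) by (apply Htp; auto).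
  assert (Hh0 : 0 <= h) by apply dist_nonneg.
  assert (Hdl0 : 0 <= Rabs (dist m p C - Rad)) by apply Rabs_pos.
  destruct (Rle_lt_dec G0 (mu' ^ 2 / 36)) as [Gs|Gb].
  2:{ assert (Hw1cs : circumsphere m tp w1).
      { split. split; auto. rewrite Ecc. auto. apply aff_vertex; auto. }
      pose proof (dist_set_le m p _ w1 Hw1cs).
      pose proof (Lmax_ge m tau p w1 Hp (proj1 Hw1tau) (not_eq_sym (proj2 Hw1tau))).
      assert (3 * eps' <= 216 / mu' ^ 3 * G0 * r0).
      { assert (216 / mu' ^ 3 * (mu' ^ 2 / 36) * (mu' * eps' / 2) = 3 * eps') by (field; lra).
        assert (216 / mu' ^ 3 * (mu' ^ 2 / 36) * (mu' * eps' / 2) <= 216 / mu' ^ 3 * G0 * r0).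
        { assert (0 < 216 / mu' ^ 3) by (apply Rdiv_lt_0_compat; [lra|apply pow_lt; lra]).
          apply Rmult_le_compat. apply Rmult_le_pos; [lra|]. apply Rmult_le_pos. apply pow_le; lra. lra.
          nra. apply Rmult_le_compat_l; lra. lra. }
        lra. }
      assert (0 <= 14 / mu' * d0 * r0) by (apply Rmult_le_pos; [apply Rmult_le_pos; [unfold Rdiv; apply Rmult_le_pos; [lra|left; apply Rinv_0_lt_compat; lra]|lra]|lra]).
      fold r0. nra. }
  assert (HG2 : G0 <= 1/36) by (pose proof (pow_le mu' 2); simpl in *; nra).
  assert (Hhb : h <= 27/2 * G0 * eps' / mu').
  { assert (HG3 : 0 <= G0 <= 1/2) by lra.
    assert (HLe : Lmax m tau <= 3 * eps') by lra.
    pose proof (pow_small G0 (S k) HG3) as Hps1.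
    assert (HX0 : 0 < G0 ^ S k) by (apply pow_lt; lra).
    destruct (pt_eq_dec q p) as [Eqp|Nqp].
    - subst q. rewrite Hh in Halt.
      assert (G0 ^ S (S k) * INR (S (S k)) * Lmax m tau <= G0 * Lmax m tau).
      { replace (G0 ^ S (S k) * INR (S (S k)) * Lmax m tau) with (G0 * (INR (S (S k)) * G0 ^ S k) * Lmax m tau) by (simpl; ring).
        apply Rmult_le_compat_r; [lra|]. assert (G0 * (INR (S (S k)) * G0 ^ S k) <= G0 * 1) by (apply Rmult_le_compat_l; lra). lra. }
      assert (G0 * Lmax m tau <= 3 * G0 * eps') by nra.
      assert (3 * G0 * eps' <= 27/2 * G0 * eps' / mu').
      { apply Rmult_le_reg_r with mu'. lra. field_simplify; try lra. nra. }
      lra.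
    - assert (Hqtp : In q tp) by (apply Htp; auto).
      set (tpq := remove_pt q tp).
      assert (Htpq : forall u, In u tpq <-> In u tau /\ u <> p /\ u <> q) by (intro u; unfold tpq; rewrite !rem_in, Htp; tauto).
      assert (Hlenpq : length tpq = S k) by (unfold tpq; rewrite rem_len; auto; [lia | apply Hsp]).
      destruct tpq as [|v tr'] eqn:Etpq; [discriminate|].
      assert (Hv : In v tpq) by (rewrite Etpq; simpl; auto).
      rewrite <- Etpq in *.
      assert (Hvt : In v tau /\ v <> p /\ v <> q) by (apply Htpq; auto).
      pose proof (alt_identity m tau p q Hp Hq (not_eq_sym Nqp) ltac:(fold tp; fold tpq; rewrite Etpq; discriminate)) as AI.
      fold tp in AI. fold tpq in AI. rewrite Hh in AI.
      assert (Hb : dist_set m p (aff tpq) <= 3 * eps').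
      { pose proof (dist_set_le m p (aff tpq) v (aff_vertex _ _ Hv)).
        pose proof (Lmax_ge m tau p v Hp (proj1 Hvt) (not_eq_sym (proj1 (proj2 Hvt)))). lra. }
      assert (Hb0 : 0 <= dist_set m p (aff tpq)) by (apply dist_set_nonneg; exists v; apply aff_vertex; auto).
      assert (HD0 : 0 <= altitude m q tau).
      { unfold altitude. apply dist_set_nonneg. exists p. apply aff_vertex. apply rem_in. split; auto. }
      assert (HDb : altitude m q tau * dist_set m p (aff tpq) <= G0 ^ S (S k) * INR (S (S k)) * (3 * eps') * (3 * eps')).
      { assert (altitude m q tau <= G0 ^ S (S k) * INR (S (S k)) * (3 * eps')).
        { assert (G0 ^ S (S k) * INR (S (S k)) * Lmax m tau <= G0 ^ S (S k) * INR (S (S k)) * (3 * eps')).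
          { apply Rmult_le_compat_l; auto. apply Rmult_le_pos. apply pow_le; lra. apply pos_INR. } lra. }
        apply Rmult_le_compat; auto. }
      assert (Hpow : G0 ^ S (S k) = G0 * G0 ^ S k) by reflexivity.
      assert (HIN : INR (S (S k)) = INR (S k) + 1) by apply S_INR.
      destruct k as [|k'].
      + destruct (alt_two m q tp (proj1 (proj2 Hsp)) Hqtp Hlenp) as [w [Hw [Hwq [Ea Hall]]]].
        assert (Hwt : In w tau /\ w <> p) by (apply Htp; auto).
        pose proof (lmin_le m tau q w Hq (proj1 Hwt) (not_eq_sym Hwq)).
        rewrite Ea in AI.
        assert (h * (mu' * eps') <= h * dist m q w) by (apply Rmult_le_compat_l; lra).
        simpl in HDb.
        assert (h * mu' * eps' <= 18 * G0 * G0 * eps' * eps') by nra.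
        assert (h * mu' <= 18 * G0 * G0 * eps').
        { apply Rmult_le_reg_r with eps'; auto; nra. }
        assert (0 <= G0 * eps') by nra. assert (18 * G0 * G0 * eps' <= 1/2 * (G0 * eps')) by nra. assert (h * mu' <= 27/2 * G0 * eps') by nra.
        apply Rmult_le_reg_r with mu'. lra. field_simplify; lra.
      + destruct Hflake as [_ Hprop].
        assert (Hface : is_face tau tp).
        { split; auto. split. apply Hsp. intros u Hu; apply Htp; auto. }
        pose proof (Hprop tp Hface ltac:(lia)) as Hgood.
        pose proof (Hgood tp (conj Htpne (conj (proj1 (proj2 Hsp)) (incl_refl tp)))) as Hth.
        assert (Hl1 : (length tp - 1)%nat = S (S k')) by lia.
        rewrite Hl1 in Hth.
        pose proof (thick_good_elem m tp (S k') _ q Hl1 Hth Hqtp) as Hq1.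
        assert (HLtp : lmin m tau <= Lmax m tp).
        { pose proof (lmin_le m tau w1 w2 (proj1 Hw1tau) (proj1 Hw2tau) (not_eq_sym Hw21)).
          pose proof (Lmax_ge m tp w1 w2 Hw1 Hw2 (not_eq_sym Hw21)). lra. }
        set (n := INR (S (S k'))) in *. set (X := G0 ^ S (S k')) in *.
        assert (Hn : 2 <= n). { unfold n. rewrite !S_INR. pose proof (pos_INR k'). lra. }
        assert (Haq : X * n * (mu' * eps') <= altitude m q tp).
        { assert (0 < mu' * eps') by (apply Rmult_lt_0_compat; lra). assert (0 < n * Lmax m tp) by (apply Rmult_lt_0_compat; lra).
          apply Rge_le in Hq1. apply Rmult_le_compat_r with (r := n * Lmax m tp) in Hq1; [|lra].
          replace (altitude m q tp / (n * Lmax m tp) * (n * Lmax m tp)) with (altitude m q tp) in Hq1 by (field; lra).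
          assert (X * n * (mu' * eps') <= X * n * Lmax m tp).
          { apply Rmult_le_compat_l. apply Rmult_le_pos; lra. lra. }
          lra. }
        assert (h * (X * n * (mu' * eps')) <= h * altitude m q tp) by (apply Rmult_le_compat_l; lra).
        rewrite Hpow, HIN in HDb.
        assert (h * n * mu' * (X * eps') <= 9 * G0 * (n + 1) * eps' * (X * eps')) by nra.
        assert (h * n * mu' <= 9 * G0 * (n + 1) * eps').
        { apply Rmult_le_reg_r with (X * eps'). nra. lra. }
        assert (0 <= G0 * eps') by nra. assert (9 * G0 * (n + 1) * eps' <= 27/2 * G0 * eps' * n) by nra. assert (h * mu' * n <= 27/2 * G0 * eps' * n) by lra.
        assert (h * mu' <= 27/2 * G0 * eps').
        { apply Rmult_le_reg_r with n. lra. lra. }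
        apply Rmult_le_reg_r with mu'. lra. field_simplify; lra. }
  fold r0. apply (final_num eps' mu' d0 G0 h (Rabs (dist m p C - Rad)) r0 Rad); auto; try lra.
  assert (d0 * lmin m tp <= d0 * (2 * r0)) by (apply Rmult_le_compat_l; lra). lra.
Qed.
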